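(* Let $G$ be a finite group acting on a space $X$ and $n\ge 2$. The evaluation map $\epsilon_n : M^G_n(X) \to X^n$, $(\alpha_1,g_1,\alpha_2,\ldots,g_{n-1},\alpha_n)\mapsto(\alpha_1(1),\ldots,\alpha_n(1))$, is a fibration. Moreover, its sectional category equals the sectional category of the saturated diagonal map $\Delta^n_G : X\times G^{n-1}\to X^n$, $(x,g_1,\ldots,g_{n-1})\mapsto (x, xg_1, xg_1g_2,\ldots, xg_1\cdots g_{n-1})$.
   Context: All spaces are Hausdorff, path-connected and locally path-connected; $G$ acts on the right. $PX$ denotes the space of paths $[0,1]\to X$ with the compact-open topology. $M^G_n(X)$ is the subspace of $PX\times G\times PX\times\cdots\times G\times PX$ (with $n$ path factors and $n-1$ group factors, $G$ discrete) consisting of tuples $(\alpha_1,g_1,\alpha_2,g_2,\ldots,\alpha_{n-1},g_{n-1},\alpha_n)$ with $\alpha_i(0)g_i=\alpha_{i+1}(0)$ for $1\le i\le n-1$. The (non-reduced) sectional category $\mathrm{secat}(p)$ of a map $p:E\to B$ is the least $k$ such that $B$ is covered by $k$ open sets on each of which $p$ admits a continuous section up to homotopy (for a fibration, a genuine continuous section); for a general map it is the sectional category of its fibrational replacement. *)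

(* Defs.v *)
From HB Require Import structures.
From mathcomp Require Import all_boot all_order all_algebra all_fingroup.
From mathcomp Require Import all_classical all_reals.
From mathcomp Require Import topology function_spaces discrete_topology.
From mathcomp Require Import subtype_topology.
From mathcomp Require Import Rstruct Rstruct_topology.
From Stdlib Require Rdefinitions.
Notation R := Rdefinitions.R.

Set Implicit Arguments.
Unset Strict Implicit.
Unset Printing Implicit Defensive.
Import Order.TTheory GRing.Theory Num.Theory.

Local Open Scope classical_set_scope.
Local Open Scope ring_scope.

Definition unitI : set R := `[0%R, 1%R].
Definition I : topologicalType := set_type unitI.

Lemma unitI0 : (0%R : R) \in unitI.
Proof. by apply/mem_set; rewrite /unitI /= in_itv /= lexx ler01. Qed.
Lemma unitI1 : (1%R : R) \in unitI.
Proof. by apply/mem_set; rewrite /unitI /= in_itv /= lexx ler01. Qed.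

Definition I0 : I := exist _ 0%R unitI0.
Definition I1 : I := exist _ 1%R unitI1.

Definition sub (X : topologicalType) (A : set X) : topologicalType := set_type A.

Definition PX (X : topologicalType) : topologicalType :=
  sub [set f : {compact-open, I -> X} | continuous (f : I -> X)].

Definition pev (X : topologicalType) (a : PX X) (t : I) : X := (val a : I -> X) t.

Definition path_joined (X : topologicalType) (A : set X) (x y : X) : Prop :=
  exists g : I -> X, [/\ continuous g, g I0 = x, g I1 = y & forall t, A (g t)].

Definition path_connected_set (X : topologicalType) (A : set X) : Prop :=
  forall x y, A x -> A y -> path_joined A x y.

Definition path_connected_space (X : topologicalType) : Prop :=
  path_connected_set [set: X].

Definition locally_path_connected (X : topologicalType) : Prop :=
  forall (x : X) (U : set X), nbhs x U ->
    exists V : set X, [/\ open V, V x, V `<=` U & path_connected_set V].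

Definition continuous_right_action (gT : finGroupType) (X : topologicalType)
    (act : X -> gT -> X) : Prop :=
  [/\ forall x, act x 1%g = x,
      forall x g h, act (act x g) h = act x (g * h)%g
    & forall g, continuous (fun x => act x g)].

Definition Gd (gT : finGroupType) : topologicalType := discrete_topology gT.

Lemma ord_succ_lt n (i : 'I_n.-1) : (i.+1 < n)%N.
Proof. by case: n i => [|n] [i /= Hi]. Qed.

Definition oL n (i : 'I_n.-1) : 'I_n := widen_ord (leq_pred n) i.
Definition oR n (i : 'I_n.-1) : 'I_n := Ordinal (ord_succ_lt i).

(** * The space M^G_n(X) ⊂ PX × G × PX × ... × G × PX, stored as
     ((α_1,...,α_n),(g_1,...,g_{n-1})) with the product topology *)
Definition Mset (gT : finGroupType) (X : topologicalType) (act : X -> gT -> X)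
    (n : nat) : set ({ptws 'I_n -> PX X} * {ptws 'I_n.-1 -> Gd gT}) :=
  [set p | forall i : 'I_n.-1,
     act (pev (p.1 (oL i)) I0) (p.2 i) = pev (p.1 (oR i)) I0].

Arguments Mset {gT X} act n.

Definition MG (gT : finGroupType) (X : topologicalType) (act : X -> gT -> X)
    (n : nat) : topologicalType := sub (Mset act n).

Arguments MG {gT X} act n.

Definition Xn (X : topologicalType) (n : nat) : topologicalType :=
  {ptws 'I_n -> X}.

Definition evalMap (gT : finGroupType) (X : topologicalType)
    (act : X -> gT -> X) (n : nat) : MG act n -> Xn X n :=
  fun m k => pev ((val m).1 k) I1.

Arguments evalMap {gT X} act n.

Definition satDiag (gT : finGroupType) (X : topologicalType)
    (act : X -> gT -> X) (n : nat) : X * {ptws 'I_n.-1 -> Gd gT} -> Xn X n :=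
  fun p k => act p.1 (\prod_(j : 'I_n.-1 | (j < k)%N) p.2 j)%g.

Arguments satDiag {gT X} act n.

Definition hurewicz_fibration (E B : topologicalType) (p : E -> B) : Prop :=
  forall (Z : topologicalType) (H : Z * I -> B) (f0 : Z -> E),
    continuous H -> continuous f0 -> (forall z, p (f0 z) = H (z, I0)) ->
    exists Ht : Z * I -> E,
      [/\ continuous Ht, forall w, p (Ht w) = H w & forall z, Ht (z, I0) = f0 z].

Definition has_homotopy_section (E B : topologicalType) (p : E -> B) (U : set B)
  : Prop :=
  exists s : sub U -> E, continuous s /\
    exists Hm : sub U * I -> B,
      [/\ continuous Hm, forall u, Hm (u, I0) = p (s u)
        & forall u, Hm (u, I1) = val u].

Definition secat_le (E B : topologicalType) (p : E -> B) (k : nat) : Prop :=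
  exists U : 'I_k -> set B,
    [/\ forall i, open (U i), \bigcup_(i in [set: 'I_k]) U i = [set: B]
      & forall i, has_homotopy_section p (U i)].

Lemma secat_ex_bool (E B : topologicalType) (p : E -> B) :
  (exists k, secat_le p k) -> exists k, `[< secat_le p k >].
Proof. by case=> k hk; exists k; apply/asboolP. Qed.

Definition secat (E B : topologicalType) (p : E -> B) : option nat :=
  match pselect (exists k, secat_le p k) with
  | left h => Some (ex_minn (secat_ex_bool h))
  | right _ => None
  end.

(* Main.v *)
Require Import Defs.
From HB Require Import structures.
From mathcomp Require Import all_boot all_order all_algebra all_fingroup.
From mathcomp Require Import all_classical all_reals.
From mathcomp Require Import topology function_spaces discrete_topology.
From mathcomp Require Import subtype_topology normedtype.
From mathcomp Require Import Rstruct Rstruct_topology.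
From mathcomp Require Import lra.

Set Implicit Arguments.
Unset Strict Implicit.
Unset Printing Implicit Defensive.
Import Order.TTheory GRing.Theory Num.Theory.
Local Open Scope classical_set_scope.
Local Open Scope ring_scope.


Definition clamp (r : R) : R := Num.min (Num.max r 0) 1.

Lemma clamp_in r : clamp r \in unitI.
Proof.
apply/mem_set; rewrite /unitI /= in_itv /= /clamp.
by rewrite ge_min lexx orbT andbT le_min ler01 le_max lexx orbT.
Qed.

Definition clampI (r : R) : I := exist _ (clamp r) (clamp_in r).

Lemma clamp_id r : (0 <= r <= 1)%R -> clamp r = r.
Proof.
move=> /andP[r0 r1]; rewrite /clamp.
by rewrite (max_idPl r0) (min_idPl r1).
Qed.

Lemma valI_bounds (t : I) : (0 <= val t <= 1)%R.
Proof. by case: t => r /= /set_mem; rewrite /unitI /= in_itv. Qed.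

Lemma clampIK (t : I) : clampI (val t) = t.
Proof. by apply: val_inj => /=; rewrite clamp_id // valI_bounds. Qed.

Lemma val_clampI r : (0 <= r <= 1)%R -> val (clampI r) = r.
Proof. by move=> h; rewrite /= clamp_id. Qed.

Lemma clamp_continuous : continuous clamp.
Proof.
move=> x; rewrite /clamp.
apply: (@continuous_min _ _ (fun r : R => Num.max r 0) (fun _ => 1)).
  apply: (@continuous_max _ _ (fun r : R => r) (fun _ => 0)).
    exact: cvg_id.
  exact: cvg_cst.
exact: cvg_cst.
Qed.

Lemma clampI_continuous : continuous clampI.
Proof.
apply: continuous_comp_initial => /=.
exact: clamp_continuous.
Qed.

Lemma val_continuous : continuous (val : I -> R).
Proof. exact: initial_continuous. Qed.

Lemma I_compact : compact [set: I].
Proof.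
have -> : [set: I] = clampI @` `[0%R, 1%R].
  apply/seteqP; split => // t _; exists (val t); last exact: clampIK.
  by rewrite /= in_itv /= valI_bounds.
apply: continuous_compact; last exact: segment_compact.
apply: continuous_subspaceT => x; exact: clampI_continuous.
Qed.

Lemma I_hausdorff : hausdorff_space I.
Proof.
rewrite open_hausdorff => x y xy.
have hR : hausdorff_space R := @Rhausdorff _.
move: hR; rewrite open_hausdorff => /(_ (val x) (val y)).
case; first by apply: contra xy => /eqP /val_inj ->.
move=> [A B] /= [xA yB] [oA oB /eqP AB].
exists ((val : I -> R) @^-1` A, (val : I -> R) @^-1` B) => /=.
  by rewrite !inE; move: xA yB; rewrite !inE.
split.
- by move: oA; apply: (proj1 (continuousP _)); exact: val_continuous.
- by move: oB; apply: (proj1 (continuousP _)); exact: val_continuous.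
- apply/eqP/seteqP; split => // t [tA tB].
  by have : (A `&` B) (val t) by []; rewrite AB.
Qed.

Lemma I_lc : locally_compact [set: I].
Proof.
move=> x _; exists [set: I]; first by rewrite withinET; exact: filterT.
split; first exact: I_compact.
exact: closedT.
Qed.


Definition mkPX (X : topologicalType) (f : I -> X) (hf : continuous f) : PX X :=
  exist _ (f : {compact-open, I -> X}) (mem_set hf).

Lemma pev_mkPX (X : topologicalType) (f : I -> X) (hf : continuous f) t :
  pev (mkPX hf) t = f t.
Proof. by []. Qed.

Lemma PX_cont (X : topologicalType) (a : PX X) : continuous (pev a).
Proof. by case: a => f hf; exact: (set_mem hf). Qed.

Lemma PX_eq (X : topologicalType) (a b : PX X) :
  (forall t, pev a t = pev b t) -> a = b.
Proof. by move=> h; apply: val_inj; apply/funext. Qed.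

Lemma pev_continuous (X : topologicalType) :
  continuous (fun p : PX X * I => pev p.1 p.2).
Proof.
have := @continuous_uncurry (PX X) I X (fun a : PX X => (val a : {compact-open, I -> X})).
move=> /(_ I_lc I_hausdorff) h.
have hc := h (@initial_continuous _ _ _) (@PX_cont X).
have -> : (fun p : PX X * I => pev p.1 p.2) = uncurry (fun a : PX X => (val a : {compact-open, I -> X})) by apply/funext; case.
exact: hc.
Qed.

Lemma mkPX_continuous (Z X : topologicalType) (F : Z -> I -> X)
  (hF : forall z, continuous (F z)) :
  continuous (fun p : Z * I => F p.1 p.2) ->
  continuous (fun z => mkPX (hF z)).
Proof.
move=> hc; apply: continuous_comp_initial => /=.
have := @continuous_curry_fun Z I X (fun p : Z * I => F p.1 p.2) hc.
done.
Qed.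


Lemma ptws_continuous (Z : topologicalType) (J : Type) (Y : topologicalType)
  (h : Z -> {ptws J -> Y}) : (forall j, continuous (fun z => h z j)) -> continuous h.
Proof.
move=> hc z.
have := @cvg_sup _ _ (fun j => Topological.class (initial_topology (fun f : (J -> Y) => f j))) (h @ nbhs z) (h z) _.
move=> [_ ]; apply => j.
have : continuous (h : Z -> initial_topology (fun f : (J -> Y) => f j)).
  by apply: continuous_comp_initial; exact: hc.
by move/(_ z).
Qed.
Lemma pair_continuous (Z A B : topologicalType) (f : Z -> A) (g : Z -> B) :
  continuous f -> continuous g -> continuous (fun z => (f z, g z)).
Proof. by move=> hf hg z; apply: cvg_pair; [exact: hf | exact: hg]. Qed.

Lemma fst_continuous (A B : topologicalType) : continuous (@fst A B).
Proof. by move=> [a b]; exact: cvg_fst. Qed.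

Lemma snd_continuous (A B : topologicalType) : continuous (@snd A B).
Proof. by move=> [a b]; exact: cvg_snd. Qed.

Definition mkMG (gT : finGroupType) (X : topologicalType) (act : X -> gT -> X) (n : nat)
  (p : {ptws 'I_n -> PX X} * {ptws 'I_n.-1 -> Gd gT}) (hp : Mset act n p) : MG act n :=
  exist _ p (mem_set hp).

Lemma MG_prop (gT : finGroupType) (X : topologicalType) (act : X -> gT -> X) (n : nat)
  (m : MG act n) : Mset act n (val m).
Proof. by case: m => p hp; exact: (set_mem hp). Qed.

Lemma comp_cont (A B C : topologicalType) (f : A -> B) (g : B -> C) :
  continuous f -> continuous g -> continuous (fun x => g (f x)).
Proof. by move=> hf hg x; exact: (continuous_comp (hf x) (hg (f x))). Qed.

Lemma MGval_continuous (gT : finGroupType) (X : topologicalType) (act : X -> gT -> X) (n : nat)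
  : continuous (fun m : MG act n => val m).
Proof. exact: initial_continuous. Qed.

Lemma MG1_continuous (gT : finGroupType) (X : topologicalType) (act : X -> gT -> X) (n : nat)
  (i : 'I_n) : continuous (fun m : MG act n => (val m).1 i).
Proof.
apply: (@comp_cont _ _ _ (fun m : MG act n => (val m).1) (fun f => f i)); last exact: proj_continuous.
apply: (@comp_cont _ _ _ (fun m : MG act n => val m) fst); last exact: fst_continuous.
exact: MGval_continuous.
Qed.

Lemma MG2_continuous (gT : finGroupType) (X : topologicalType) (act : X -> gT -> X) (n : nat)
  : continuous (fun m : MG act n => (val m).2).
Proof.
apply: (@comp_cont _ _ _ (fun m : MG act n => val m) snd); last exact: snd_continuous.
exact: MGval_continuous.
Qed.

Lemma mkMG_continuous (gT : finGroupType) (X : topologicalType) (act : X -> gT -> X) (n : nat)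
  (Z : topologicalType) (F : Z -> {ptws 'I_n -> PX X} * {ptws 'I_n.-1 -> Gd gT})
  (hF : forall z, Mset act n (F z)) :
  (forall i, continuous (fun z => (F z).1 i)) -> continuous (fun z => (F z).2) ->
  continuous (fun z => mkMG (hF z)).
Proof.
move=> h1 h2; apply: continuous_comp_initial => /=.
have E : (fun z => F z) = (fun z => ((F z).1, (F z).2)) by apply/funext => z; case: (F z).
move=> z; rewrite /comp E.
by apply: pair_continuous => //; exact: ptws_continuous.
Qed.


Lemma prefix_prod (gT : finGroupType) (m : nat) (g : 'I_m -> gT) (k : nat) (hk : (k < m)%N) :
  (\prod_(j : 'I_m | (j < k.+1)%N) g j)%g =
  ((\prod_(j : 'I_m | (j < k)%N) g j) * g (Ordinal hk))%g.
Proof.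
case: m g hk => [|m] g hk //.
pose F (j : nat) := g (inord j).
have E1 : forall c, (\prod_(j : 'I_m.+1 | (j < c)%N) g j)%g = (\prod_(j : 'I_m.+1 | (j < c)%N) F j)%g.
  by move=> c; apply: eq_bigr => j _; rewrite /F inord_val.
rewrite !E1 -(big_ord_widen _ F hk) -(big_ord_widen _ F (ltnW hk)) big_ord_recr /=.
by congr (_ * _)%g; rewrite /F; congr (g _); apply: val_inj; rewrite /= inordK.
Qed.

Lemma Mset_prefix (gT : finGroupType) (X : topologicalType) (act : X -> gT -> X) (n : nat)
  (p : {ptws 'I_n -> PX X} * {ptws 'I_n.-1 -> Gd gT}) :
  continuous_right_action act -> Mset act n p ->
  forall (h0 : (0 < n)%N) (k : nat) (hk : (k < n)%N),
  act (pev (p.1 (Ordinal h0)) I0) (\prod_(j : 'I_n.-1 | (j < k)%N) p.2 j)%g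
    = pev (p.1 (Ordinal hk)) I0.
Proof.
case=> a1 aM _ hm h0; elim=> [|k IH] hk.
  rewrite big_pred0 // a1; congr (pev (p.1 _) I0); exact: val_inj.
have hk1 : (k < n.-1)%N by case: n {hm h0 IH} p hk => //.
have hk' : (k < n)%N by apply: ltnW.
rewrite (prefix_prod _ hk1) -aM IH.
have := hm (Ordinal hk1).
have -> : oL (Ordinal hk1) = Ordinal hk' by apply: val_inj.
move=> ->; congr (pev (p.1 _) I0); exact: val_inj.
Qed.


Lemma secat_eq (E1 E2 B : topologicalType) (p1 : E1 -> B) (p2 : E2 -> B) :
  (forall U, has_homotopy_section p1 U <-> has_homotopy_section p2 U) ->
  secat p1 = secat p2.
Proof.
move=> hU.
have hk : forall k, secat_le p1 k <-> secat_le p2 k.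
  move=> k; split => -[U [oU cU sU]]; exists U; split => // i; exact/hU.
rewrite /secat; case: pselect => h1; case: pselect => h2.
- congr Some; apply/eqP; rewrite eqn_leq.
  case: ex_minnP => k1 /asboolP hk1 min1; case: ex_minnP => k2 /asboolP hk2 min2.
  rewrite min1 ?min2 //; apply/asboolP; exact/hk.
- by exfalso; apply: h2; case: h1 => k /hk; exists k.
- by exfalso; apply: h1; case: h2 => k /hk; exists k.
- by [].
Qed.


Lemma paste (T U : topologicalType) (phi : T -> R) (f g1 g2 : T -> U) :
  continuous phi -> continuous g1 -> continuous g2 ->
  (forall t, phi t <= 1 -> f t = g1 t) -> (forall t, 1 <= phi t -> f t = g2 t) ->
  continuous f.
Proof.
move=> cphi cg1 cg2 e1 e2.
have cA : closed [set t | phi t <= 1].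
  exact: (proj1 (continuous_closedP phi) cphi _ (@closed_le R 1)).
have cB : closed [set t | 1 <= phi t].
  exact: (proj1 (continuous_closedP phi) cphi _ (@closed_ge R 1)).
apply/continuous_subspace_setT.
have -> : [set: T] = [set t | phi t <= 1] `|` [set t | 1 <= phi t].
  apply/seteqP; split => // t _ /=; case: (lerP (phi t) 1) => h; [left|right] => //.
  exact: ltW.
apply: withinU_continuous => //.
  apply: (@subspace_eq_continuous _ _ _ g1); first by move=> t /set_mem /e1 <-.
  exact: continuous_subspaceT.
apply: (@subspace_eq_continuous _ _ _ g2); first by move=> t /set_mem /e2 <-.
exact: continuous_subspaceT.
Qed.


Section Fib.
Variables (gT : finGroupType) (X : topologicalType) (act : X -> gT -> X) (n : nat).
Variables (Z : topologicalType) (H : Z * I -> Xn X n) (f0 : Z -> MG act n).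
Hypotheses (cH : continuous H) (cf0 : continuous f0)
  (hc : forall z, evalMap act n (f0 z) = H (z, I0)).

Definition Phi (q : (Z * I) * I) : R := val q.2 * (1 + val q.1.2).

Definition L (i : 'I_n) (q : (Z * I) * I) : X :=
  if Phi q <= 1 then pev ((val (f0 q.1.1)).1 i) (clampI (Phi q))
  else H (q.1.1, clampI (Phi q - 1)) i.

Lemma clampI0 : clampI 0 = I0.
Proof. by apply: val_inj; rewrite /= clamp_id // lexx ler01. Qed.

Lemma clampI1 : clampI 1 = I1.
Proof. by apply: val_inj; rewrite /= clamp_id // lexx ler01. Qed.

Lemma Phi_cont : continuous Phi.
Proof.
move=> q; apply: (continuousM (s := fun q : (Z * I) * I => val q.2) (t := fun q : (Z * I) * I => 1 + val q.1.2)).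
  exact: (@comp_cont _ _ _ snd (val : I -> R) (@snd_continuous _ _) val_continuous).
apply: (continuousD (f := fun _ : (Z * I) * I => (1 : R^o)) (g := fun q : (Z * I) * I => (val q.1.2 : R^o))); first exact: cvg_cst.
apply: (@comp_cont _ _ _ (fun q : (Z * I) * I => q.1.2) (val : I -> R)); last exact: val_continuous.
exact: (@comp_cont _ _ _ fst snd (@fst_continuous _ _) (@snd_continuous _ _)).
Qed.

Lemma L_cont i : continuous (L i).
Proof.
apply: (@paste _ _ Phi _ (fun q => pev ((val (f0 q.1.1)).1 i) (clampI (Phi q)))
                         (fun q => H (q.1.1, clampI (Phi q - 1)) i)).
- exact: Phi_cont.
- apply: (@comp_cont _ _ _ (fun q => ((val (f0 q.1.1)).1 i, clampI (Phi q)))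
     (fun p : PX X * I => pev p.1 p.2)); last exact: pev_continuous.
  apply: pair_continuous.
    apply: (@comp_cont _ _ _ (fun q : (Z * I) * I => q.1.1) (fun z => (val (f0 z)).1 i)).
      exact: (@comp_cont _ _ _ fst fst (@fst_continuous _ _) (@fst_continuous _ _)).
    exact: (@comp_cont _ _ _ f0 _ cf0 (@MG1_continuous _ _ act n i)).
  exact: (@comp_cont _ _ _ Phi clampI Phi_cont clampI_continuous).
- apply: (@comp_cont _ _ _ (fun q => H (q.1.1, clampI (Phi q - 1))) (fun f => f i)); last exact: proj_continuous.
  apply: (@comp_cont _ _ _ (fun q => (q.1.1, clampI (Phi q - 1))) H); last exact: cH.
  apply: pair_continuous.
    exact: (@comp_cont _ _ _ fst fst (@fst_continuous _ _) (@fst_continuous _ _)).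
  apply: (@comp_cont _ _ _ (fun q => Phi q - 1) clampI); last exact: clampI_continuous.
  move=> q; apply: (continuousB (f := fun q => (Phi q : R^o)) (g := fun _ => (1 : R^o))); first exact: Phi_cont.
  exact: cvg_cst.
- by move=> q h; rewrite /L h.
- move=> q h; rewrite /L; case: ifPn => // h'.
  have e : Phi q = 1 by apply/eqP; rewrite eq_le h h'.
  rewrite e subrr clampI1 clampI0 -hc.
  by [].
Qed.

Lemma L_cont_s i (w : Z * I) : continuous (fun s => L i (w, s)).
Proof.
apply: (@comp_cont _ _ _ (fun s : I => (w, s)) (L i)); last exact: L_cont.
apply: pair_continuous; first exact: cst_continuous.
by move=> s; exact: cvg_id.
Qed.

Definition liftP i (w : Z * I) : PX X := mkPX (@L_cont_s i w).

Lemma liftP0 i w : pev (liftP i w) I0 = pev ((val (f0 w.1)).1 i) I0.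
Proof.
by rewrite pev_mkPX /L /Phi /= mul0r ler01 clampI0.
Qed.

Lemma lift_M (w : Z * I) : Mset act n ((fun i => liftP i w), (val (f0 w.1)).2).
Proof.
move=> i /=; rewrite !liftP0; exact: (MG_prop (f0 w.1) i).
Qed.

Definition Ht (w : Z * I) : MG act n := mkMG (lift_M w).

Lemma Ht_cont : continuous Ht.
Proof.
apply: mkMG_continuous => /=.
  move=> i; apply: mkPX_continuous.
  have -> : (fun p : (Z * I) * I => L i (p.1, p.2)) = L i by apply/funext; case.
  exact: L_cont.
apply: (@comp_cont _ _ _ fst (fun z => (val (f0 z)).2)); first exact: fst_continuous.
exact: (@comp_cont _ _ _ f0 _ cf0 (@MG2_continuous _ _ act n)).
Qed.

Lemma Ht_p w : evalMap act n (Ht w) = H w.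
Proof.
apply/funext => k; rewrite /evalMap /= pev_mkPX /L /Phi /= mul1r.
case: w => z t /=; case: ifPn => h.
  have t0 : t = I0.
    apply: val_inj => /=; have /andP[h0 _] := valI_bounds t.
    have h00 : (0 <= sval t)%R := h0; lra.
  subst t; rewrite /= addr0 clampI1.
  by have := hc z => /(congr1 (fun f => f k)); rewrite /evalMap.
by rewrite (addrC 1) addrK clampIK.
Qed.

Lemma Ht_0 z : Ht (z, I0) = f0 z.
Proof.
apply: val_inj => /=; rewrite [RHS]surjective_pairing; congr pair.
apply/funext => i; apply: PX_eq => s; rewrite pev_mkPX /L /Phi /= addr0 mulr1.
by have /andP[_ ->] := valI_bounds s; rewrite clampIK.
Qed.

End Fib.

Lemma fibration (gT : finGroupType) (X : topologicalType) (act : X -> gT -> X) (n : nat) :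
  hurewicz_fibration (evalMap act n).
Proof.
move=> Z H f0 cH cf0 hc; exists (Ht cH cf0 hc); split.
- exact: Ht_cont.
- exact: Ht_p.
- exact: Ht_0.
Qed.


Lemma pevt_continuous (X : topologicalType) (t : I) : continuous (fun a : PX X => pev a t).
Proof.
apply: (@comp_cont _ _ _ (fun a : PX X => (a, t)) (fun p : PX X * I => pev p.1 p.2)); last exact: pev_continuous.
by apply: pair_continuous; [move=> a; exact: cvg_id | exact: cst_continuous].
Qed.

Lemma sec_eps_to_delta (gT : finGroupType) (X : topologicalType) (act : X -> gT -> X) (n : nat)
  (U : set (Xn X n)) :
  continuous_right_action act -> (0 < n)%N ->
  has_homotopy_section (evalMap act n) U -> has_homotopy_section (satDiag act n) U.
Proof.
move=> hact hn [s [cs [Hm [cHm h0 h1]]]].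
have [Ht [cHt hp hHt0]] := @fibration gT X act n (sub U) Hm s cHm cs (fun u => esym (h0 u)).
pose s1 u := Ht (u, I1).
have cs1 : continuous s1.
  apply: (@comp_cont _ _ _ (fun u => (u, I1)) Ht); last exact: cHt.
  by apply: pair_continuous; [move=> a; exact: cvg_id | exact: cst_continuous].
have hs1 : forall u, evalMap act n (s1 u) = val u by move=> u; rewrite /s1 hp h1.
pose o0 : 'I_n := Ordinal hn.
exists (fun u => (pev ((val (s1 u)).1 o0) I0, (val (s1 u)).2)); split.
  apply: pair_continuous.
    apply: (@comp_cont _ _ _ (fun u => (val (s1 u)).1 o0) (fun a => pev a I0)); last exact: pevt_continuous.
    exact: (@comp_cont _ _ _ s1 _ cs1 (@MG1_continuous _ _ act n o0)).
  exact: (@comp_cont _ _ _ s1 _ cs1 (@MG2_continuous _ _ act n)).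
exists (fun ut : sub U * I => (fun k => pev ((val (s1 ut.1)).1 k) ut.2) : Xn X n); split.
- apply: ptws_continuous => k.
  apply: (@comp_cont _ _ _ (fun ut : sub U * I => ((val (s1 ut.1)).1 k, ut.2))
           (fun p : PX X * I => pev p.1 p.2)); last exact: pev_continuous.
  apply: pair_continuous; last exact: snd_continuous.
  apply: (@comp_cont _ _ _ fst (fun u => (val (s1 u)).1 k)); first exact: fst_continuous.
  exact: (@comp_cont _ _ _ s1 _ cs1 (@MG1_continuous _ _ act n k)).
- move=> u; apply/funext => k /=; rewrite /satDiag /=.
  have := @Mset_prefix gT X act n (val (s1 u)) hact (MG_prop (s1 u)) hn k (ltn_ord k).
  have -> : Ordinal (ltn_ord k) = k by apply: val_inj.
  by move=> ->.
- move=> u; apply/funext => k /=.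
  by rewrite -(hs1 u).
Qed.

Definition constP (X : topologicalType) (x : X) : PX X := mkPX (@cst_continuous I X x).

Lemma sec_delta_to_eps (gT : finGroupType) (X : topologicalType) (act : X -> gT -> X) (n : nat)
  (U : set (Xn X n)) :
  continuous_right_action act ->
  has_homotopy_section (satDiag act n) U -> has_homotopy_section (evalMap act n) U.
Proof.
move=> [a1 aM _] [s [cs [Hm [cHm h0 h1]]]].
have hM : forall u, Mset act n ((fun i => constP (Hm (u, I0) i)), (s u).2).
  move=> u i /=; rewrite /constP !pev_mkPX h0 /satDiag aM.
  have -> : (oR i : nat) = i.+1 by [].
  rewrite (prefix_prod _ (ltn_ord i)).
  by have -> : Ordinal (ltn_ord i) = i by apply: val_inj.
exists (fun u => mkMG (hM u)); split.
  apply: mkMG_continuous => /=.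
    move=> i; apply: (@mkPX_continuous _ _ (fun u (_ : I) => Hm (u, I0) i)).
    apply: (@comp_cont _ _ _ (fun p : sub U * I => Hm (p.1, I0)) (fun f => f i)); last exact: proj_continuous.
    apply: (@comp_cont _ _ _ (fun p : sub U * I => (p.1, I0)) Hm); last exact: cHm.
    by apply: pair_continuous; [exact: fst_continuous | exact: cst_continuous].
  exact: (@comp_cont _ _ _ s snd cs (@snd_continuous _ _)).
exists Hm; split => //.
Qed.

Theorem mainTheorem1 (gT : finGroupType) (X : topologicalType)
    (act : X -> gT -> X) (n : nat) :
  hausdorff_space X -> path_connected_space X -> locally_path_connected X ->
  continuous_right_action act -> (2 <= n)%N ->
  hurewicz_fibration (evalMap act n) /\
  secat (evalMap act n) = secat (satDiag act n).
Proof.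
move=> _ _ _ hact hn; split; first exact: fibration.
have hn0 : (0 < n)%N by apply: leq_trans hn.
apply: secat_eq => U; split.
  exact: sec_eps_to_delta.
exact: sec_delta_to_eps.
Qed.
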